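(* Let $\mathcal{M}=\mathcal{M}_1\times\cdots\times\mathcal{M}_n$ with each $\mathcal{M}_i\subset\mathbb{R}^{m_i}$ nonempty compact convex, and let $f:\mathbb{R}^m\to\mathbb{R}$ be differentiable. Suppose there is a positive semidefinite matrix $H$, partitioned into blocks $H_{ij}$ conformally with the blocks of $x$, such that $f(y)\le f(x)+\langle y-x,\nabla f(x)\rangle+\frac12(y-x)^TH(y-x)$ for all $x,y\in\mathcal{M}$. Define $B_i=\sup_{x_i\in\mathcal{M}_i}x_i^TH_{ii}x_i$, $\mu_{ij}=\sup_{x_i\in\mathcal{M}_i,x_j\in\mathcal{M}_j}x_i^TH_{ij}x_j$, $B=\frac1n\sum_{i=1}^nB_i$, and $\mu=\frac{1}{n(n-1)}\sum_{i\ne j}\mu_{ij}$. Then for every $\tau=1,\dots,n$, $$C_f^{\tau}\le 4\big(\tau B+\tau(\tau-1)\mu\big).$$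
   Context: Notation: $x=(x_{(1)},\dots,x_{(n)})$; for $S\subseteq[n]$, $x_{(S)}$ is the subvector of blocks in $S$, $\mathcal{M}^{(S)}=\prod_{i\in S}\mathcal{M}_i$, $\nabla_{(S)}f$ the partial gradient, $s_{[S]}\in\mathbb{R}^m$ is $s_{(S)}$ padded with zeros outside $S$. Set curvature: $C_f^{(S)}=\sup\frac{2}{\gamma^2}\big(f(y)-f(x)-\langle y_{(S)}-x_{(S)},\nabla_{(S)}f(x)\rangle\big)$ over $x\in\mathcal{M}$, $s_{(S)}\in\mathcal{M}^{(S)}$, $\gamma\in(0,1]$, $y=x+\gamma(s_{[S]}-x_{[S]})$. Expected set curvature: $C_f^\tau=\binom{n}{\tau}^{-1}\sum_{S\subseteq[n],|S|=\tau}C_f^{(S)}$. *)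

(* Defs.v *)
From HB Require Import structures.
From mathcomp Require Import all_boot all_order all_algebra.
From mathcomp Require Import all_classical all_reals all_analysis.
Set Implicit Arguments. Unset Strict Implicit. Unset Printing Implicit Defensive.
Import Order.TTheory GRing.Theory Num.Theory.
Import numFieldNormedType.Exports.
Local Open Scope classical_set_scope.
Local Open Scope ring_scope.

(* Vectors of R^m with m = m_1 + ... + m_n are column vectors of size
   \sum_i ms i; the block x_(i) is [submxcol x i]. *)

Section Blocks.
Variables (R : realType) (n : nat) (ms : 'I_n -> nat).
Local Notation m := (\sum_(i < n) ms i)%N.

Definition ip k (u v : 'cV[R]_k) : R := (u^T *m v) 0 0.

Definition grad (f : 'cV[R]_m -> R) (x : 'cV[R]_m) : 'cV[R]_m :=
  \col_k ('d f x (delta_mx k 0) : R).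

Definition prodset (Ms : forall i : 'I_n, set 'cV[R]_(ms i)) : set 'cV[R]_m :=
  [set x | forall i, Ms i (submxcol x i)].

Definition padS (S : {set 'I_n}) (s : 'cV[R]_m) : 'cV[R]_m :=
  \mxcol_i (if i \in S then submxcol s i else 0).

Definition partial_ip (S : {set 'I_n}) (f : 'cV[R]_m -> R) (x y : 'cV[R]_m) : R :=
  \sum_(i in S) ip (submxcol (y - x) i) (submxcol (grad f x) i).

Definition set_curv (Ms : forall i : 'I_n, set 'cV[R]_(ms i))
    (f : 'cV[R]_m -> R) (S : {set 'I_n}) : \bar R :=
  ereal_sup [set r : \bar R | exists x s g,
      [/\ prodset Ms x, (forall i, i \in S -> Ms i (submxcol s i)), 0 < g <= 1 &
       r = ((2 / g ^+ 2) * (f (x + g *: (padS S s - padS S x)) - f x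
             - partial_ip S f x (x + g *: (padS S s - padS S x))))%:E]].

Definition exp_set_curv (Ms : forall i : 'I_n, set 'cV[R]_(ms i))
    (f : 'cV[R]_m -> R) (tau : nat) : \bar R :=
  (('C(n, tau))%:R^-1)%:E * \sum_(S : {set 'I_n} | #|S| == tau) set_curv Ms f S.

Definition Bi (Ms : forall i : 'I_n, set 'cV[R]_(ms i)) (H : 'M[R]_m) (i : 'I_n) : R :=
  sup [set ip xi (submxblock H i i *m xi) | xi in Ms i].

Definition muij (Ms : forall i : 'I_n, set 'cV[R]_(ms i)) (H : 'M[R]_m) (i j : 'I_n) : R :=
  sup [set r : R | exists xi xj,
    [/\ Ms i xi, Ms j xj & r = ip xi (submxblock H i j *m xj)]].

Definition Bavg Ms H : R := n%:R^-1 * \sum_(i < n) Bi Ms H i.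
Definition muavg Ms H : R :=
  (n%:R * (n%:R - 1))^-1 * \sum_(i < n) \sum_(j < n | j != i) muij Ms H i j.

End Blocks.

(* Main.v *)
Require Import Defs.
From HB Require Import structures.
From mathcomp Require Import all_boot all_order all_algebra.
From mathcomp Require Import ring lra zify.
From Stdlib Require Import Lia.
Set Implicit Arguments. Unset Strict Implicit. Unset Printing Implicit Defensive.
Import Order.TTheory GRing.Theory Num.Theory.
Lemma count_sup (T : finType) (D : {set T}) k : #|D| <= k ->
  #|[set S : {set T} | (D \subset S) && (#|S| == k)]| = 'C(#|T| - #|D|, k - #|D|).
Proof.
move=> Dk.
have setUD : forall S : {set T}, D \subset S -> (S :\: D) :|: D = S.
  move=> S DS; apply/setP => x; rewrite !inE.
  by case xD: (x \in D); rewrite ?orbT ?orbF //= (subsetP DS).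
have -> : #|T| - #|D| = #|~: D| by rewrite -(cardsC D) addKn.
rewrite -cards_draws.
rewrite -(@card_in_imset _ _ (fun S => S :\: D)); last first.
  move=> S1 S2; rewrite !inE => /andP[h1 _] /andP[h2 _] e.
  by rewrite -(setUD _ h1) -(setUD _ h2) e.
apply: eq_card => A; rewrite !inE.
apply/imsetP/andP => [[S] | [AD /eqP cA]].
  rewrite inE => /andP[DS /eqP cS] ->; split.
    by apply/subsetP => x; rewrite !inE => /andP[].
  by rewrite cardsD (setIidPr DS) cS.
exists (A :|: D).
  rewrite inE subsetUr /= cardsU.
  have -> : A :&: D = set0.
    apply/setP => x; rewrite !inE; apply/negbTE; apply/negP => /andP[xA xD].
    by move/subsetP: AD => /(_ x xA); rewrite inE xD.
  by rewrite cards0 subn0 cA subnK.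
apply/setP => x; rewrite !inE.
case xD: (x \in D); rewrite ?andbF ?andbT ?orbF //=.
by apply/negbTE/negP => xA; move/subsetP: AD => /(_ x xA); rewrite inE xD.
Qed.
Local Open Scope ring_scope.

Lemma exch1 (R : ringType) (I : finType) (P : pred {set I}) (F : I -> R) :
  \sum_(S | P S) \sum_(i in S) F i =
  \sum_i F i * #|[set S | P S && (i \in S)]|%:R.
Proof.
rewrite (exchange_big_dep predT) //=; apply: eq_bigr => i _.
rewrite (eq_bigl (fun S => S \in [set S | P S && (i \in S)])); last by move=> S; rewrite inE.
by rewrite sumr_const mulr_natr.
Qed.

Lemma exch2 (R : ringType) (I : finType) (P : pred {set I}) (G : I -> I -> R) :
  \sum_(S | P S) \sum_(i in S) \sum_(j in S | j != i) G i j =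
  \sum_i \sum_(j | j != i) G i j * #|[set S | P S && (i \in S) && (j \in S)]|%:R.
Proof.
rewrite (exchange_big_dep predT) //=; apply: eq_bigr => i _.
rewrite (exchange_big_dep (fun j => j != i)) /=; last by move=> S j _ /andP[].
apply: eq_bigr => j ji.
rewrite (eq_bigl (fun S => S \in [set S | P S && (i \in S) && (j \in S)])); last first.
  by move=> S; rewrite inE ji andbT.
by rewrite sumr_const mulr_natr.
Qed.

Local Close Scope ring_scope.
Lemma count_sup0 (T : finType) (D : {set T}) k : k < #|D| ->
  #|[set S : {set T} | (D \subset S) && (#|S| == k)]| = 0.
Proof.
move=> kD; apply: eq_card0 => S; rewrite inE.
apply/negP => /andP[DS /eqP cS].
by have := subset_leq_card DS; rewrite cS leqNgt kD.
Qed.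

Lemma c1_nat n k i : 0 < k <= n ->
  n * #|[set S : {set 'I_n} | (#|S| == k) && (i \in S)]| = k * 'C(n, k).
Proof.
case/andP => k0 kn.
have -> : #|[set S : {set 'I_n} | (#|S| == k) && (i \in S)]| =
   #|[set S : {set 'I_n} | ([set i] \subset S) && (#|S| == k)]|.
  by apply: eq_card => S; rewrite !inE sub1set andbC.
rewrite count_sup ?cards1 // card_ord.
have := mul_bin_diag n k.-1; rewrite prednK // => <-.
by rewrite !subn1.
Qed.

Lemma c2_nat n k (i j : 'I_n) : j != i -> 0 < k <= n ->
  n * (n - 1) * #|[set S : {set 'I_n} | (#|S| == k) && (i \in S) && (j \in S)]| =
  k * (k - 1) * 'C(n, k).
Proof.
move=> ji /andP[k0 kn].
have -> : #|[set S : {set 'I_n} | (#|S| == k) && (i \in S) && (j \in S)]| =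
   #|[set S : {set 'I_n} | ([set i; j] \subset S) && (#|S| == k)]|.
  by apply: eq_card => S; rewrite !inE subUset !sub1set; case: (#|S| == k); case: (i \in S); case: (j \in S).
have c2 : #|[set i; j]| = 2 by rewrite cards2 eq_sym ji.
case: (ltnP k 2) => k2.
  rewrite count_sup0 ?c2 // muln0.
  by have -> : k = 1 by apply/eqP; rewrite eqn_leq -ltnS k2.
rewrite count_sup ?c2 // card_ord.
have := mul_bin_diag n.-1 (k - 2).
have -> : (k - 2).+1 = k - 1 by rewrite subnS prednK // subn_gt0.
move=> e.
have := mul_bin_diag n k.-1; rewrite prednK // => e2.
rewrite -!subn1 -subnDA in e e2 *.
by rewrite -mulnA e mulnCA e2 mulnCA mulnA.
Qed.

From mathcomp Require Import all_classical all_reals all_analysis.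
Import numFieldNormedType.Exports.
Local Open Scope classical_set_scope.
Local Open Scope ring_scope.

Lemma entry_bound (R : realType) p (A : set 'cV[R]_p) : compact A ->
  exists M : R, forall x, A x -> forall k, `|x k 0| <= M.
Proof.
move=> /compact_bounded [M0 [_ HM]].
exists (M0 + 1) => x Ax k.
have h : mx_norm x <= M0 + 1 := HM (M0 + 1) ltac:(by rewrite ltrDl) x Ax.
apply: le_trans h; rewrite mx_normrE.
exact: (le_bigmax _ _ (k, 0)).
Qed.

Lemma ip_bound (R : realType) p q (A : 'M[R]_(p, q)) (u : 'cV[R]_p) (v : 'cV[R]_q) M1 M2 :
  (forall k, `|u k 0| <= M1) -> (forall l, `|v l 0| <= M2) ->
  ip u (A *m v) <= \sum_k \sum_l M1 * (`|A k l| * M2).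
Proof.
move=> hu hv; apply: le_trans (ler_norm _) _.
rewrite /ip mxE; apply: le_trans (ler_norm_sum _ _ _) _.
apply: ler_sum => k _; rewrite !mxE normrM.
have M10 : 0 <= M1 by apply: le_trans (hu k).
apply: le_trans (ler_pM (normr_ge0 _) (normr_ge0 _) (hu k) (ler_norm_sum _ _ _)) _.
rewrite mulr_sumr; apply: ler_sum => l _; rewrite normrM.
by apply: ler_wpM2l => //; apply: ler_wpM2l => //.
Qed.

Lemma compact_ip_ub (R : realType) p q (A : 'M[R]_(p, q)) (X : set 'cV[R]_p) (Y : set 'cV[R]_q) :
  compact X -> compact Y ->
  exists K, forall u v, X u -> Y v -> ip u (A *m v) <= K.
Proof.
move=> /entry_bound [M1 h1] /entry_bound [M2 h2].
exists (\sum_k \sum_l M1 * (`|A k l| * M2)) => u v Xu Yv.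
exact: ip_bound (h1 u Xu) (h2 v Yv).
Qed.
Section L.
Variables (R : realType) (n : nat) (ms : 'I_n -> nat).
Local Notation m := (\sum_(i < n) ms i)%N.
Lemma ip_sumblocks (u v : 'cV[R]_m) :
  ip u v = \sum_i ip (submxcol u i) (submxcol v i).
Proof.
rewrite /ip -{1}(submxcolK u) -{1}(submxcolK v) tr_mxcol mul_mxrow_mxcol.
by rewrite summxE.
Qed.

Lemma ip_block (u v : 'cV[R]_m) (A : 'M[R]_m) :
  ip u (A *m v) = \sum_i \sum_j ip (submxcol u i) (submxblock A i j *m submxcol v j).
Proof.
rewrite /ip -{1}(submxcolK u) -{1}(submxcolK v) -{1}(submxblockK A).
rewrite tr_mxcol mul_mxblock_mxrow mul_mxrow_mxcol summxE.
apply: eq_bigr => i _; rewrite mulmx_sumr summxE //.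
Qed.

Lemma submxcol_pad S (z : 'cV[R]_m) i :
  submxcol (padS S z) i = if i \in S then submxcol z i else 0.
Proof. by rewrite /padS mxcolK. Qed.

Lemma submxcolZ (a : R) (z : 'cV[R]_m) i :
  submxcol (a *: z) i = a *: submxcol z i.
Proof. by apply/matrixP => k l; rewrite !mxE. Qed.

Lemma ipZl k (a : R) (u v : 'cV[R]_k) : ip (a *: u) v = a * ip u v.
Proof. by rewrite /ip linearZ /= -scalemxAl mxE. Qed.

Lemma ipZr k (a : R) (u v : 'cV[R]_k) : ip u (a *: v) = a * ip u v.
Proof. by rewrite /ip -scalemxAr mxE. Qed.

Lemma ip0l k (v : 'cV[R]_k) : ip 0 v = 0.
Proof. by rewrite /ip trmx0 mul0mx mxE. Qed.

Lemma quad_par k (H : 'M[R]_k) (a b : 'cV[R]_k) :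
  ip (a - b) (H *m (a - b)) + ip (a + b) (H *m (a + b)) =
  2 * ip a (H *m a) + 2 * ip b (H *m b).
Proof.
rewrite /ip !linearD !linearN /= !(mulmxDr, mulmxN, mulmxDl, mulNmx).
rewrite !mxE. ring.
Qed.
End L.
Unset Implicit Arguments.
Section Sup.
Variables (R : realType) (n : nat) (ms : 'I_n -> nat).
Variables (Ms : forall i : 'I_n, set 'cV[R]_(ms i)) (H : 'M[R]_(\sum_(i < n) ms i)).
Hypothesis cM : forall i : 'I_n, compact (Ms i).

Lemma Bi_ge (i : 'I_n) (xi : 'cV[R]_(ms i)) : Ms i xi -> ip xi (submxblock H i i *m xi) <= Bi Ms H i.
Proof.
move=> Mx; apply: sup_upper_bound; last by exists xi.
split; first by exists (ip xi (submxblock H i i *m xi)), xi.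
have [K hK] := compact_ip_ub (submxblock H i i) (cM i) (cM i).
by exists K => _ [y My <-]; apply: hK.
Qed.

Lemma muij_ge (i j : 'I_n) (xi : 'cV[R]_(ms i)) (xj : 'cV[R]_(ms j)) : Ms i xi -> Ms j xj ->
  ip xi (submxblock H i j *m xj) <= muij Ms H i j.
Proof.
move=> Mx My; apply: sup_upper_bound; last by exists xi, xj.
split; first by exists (ip xi (submxblock H i j *m xj)), xi, xj.
have [K hK] := compact_ip_ub (submxblock H i j) (cM i) (cM j).
by exists K => _ [y [z [My' Mz ->]]]; apply: hK.
Qed.

Variable f : 'cV[R]_(\sum_(i < n) ms i) -> R.
Hypothesis hconv : forall i : 'I_n, convex_set (Ms i).
Hypothesis hpsd : forall v : 'cV[R]_(\sum_(i < n) ms i), 0 <= ip v (H *m v).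
Hypothesis hf : forall x y, prodset Ms x -> prodset Ms y ->
     f y <= f x + ip (y - x) (grad f x) + 2^-1 * ip (y - x) (H *m (y - x)).

Definition KS (S : {set 'I_n}) := \sum_(i in S) (Bi Ms H i + \sum_(j in S | j != i) muij Ms H i j).

Lemma quad_pad (S : {set 'I_n}) z : (forall i, i \in S -> Ms i (submxcol z i)) ->
  ip (padS S z) (H *m padS S z) <= KS S.
Proof.
move=> hz; rewrite ip_block /KS.
rewrite [X in _ <= X]big_mkcond /=; apply: ler_sum => i _.
rewrite submxcol_pad; case: ifP => iS; last first.
  by rewrite big1 // => j _; rewrite ip0l.
rewrite (bigD1 i) //= submxcol_pad iS; apply: lerD; first exact: Bi_ge (hz i iS).
rewrite [X in _ <= X]big_mkcond /=; rewrite [X in X <= _]big_mkcond /=.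
apply: ler_sum => j _; rewrite submxcol_pad.
have [jS|jS] := boolP (j \in S); have [ji|ji] := boolP (j != i);
  rewrite /= ?jS ?ji /= ?mulmx0 ?ip0l /= ?lexx; try by rewrite /ip mulmx0 mxE.
  exact: muij_ge (hz i iS) (hz j jS).
all: by [].
Qed.

Lemma set_curv_le (S : {set 'I_n}) : (set_curv Ms f S <= (4 * KS S)%:E)%E.
Proof.
apply: ge_ereal_sup => _ [x [s [g [Mx Ms' /andP[g0 g1] ->]]]]; rewrite lee_fin.
set d := padS S s - padS S x.
set y := x + g *: d.
have yx : y - x = g *: d by rewrite /y addrAC subrr add0r.
have My : prodset Ms y.
  move=> i; rewrite /y submxcolD submxcolZ /d submxcolB !submxcol_pad.
  case: ifP => iS; last by rewrite subrr scaler0 addr0; apply: Mx.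
  have := hconv i _ _ (Itv01 (ltW g0) g1) (mem_set (Ms' i iS)) (mem_set (Mx i)).
  rewrite inE; congr (Ms i _).
  change (g *: submxcol s i + (1 - g) *: submxcol x i = submxcol x i + g *: (submxcol s i - submxcol x i)).
  by rewrite scalerBl scale1r scalerBr addrCA addrA addrC.
have hpart : partial_ip S f x y = ip (y - x) (grad f x).
  rewrite ip_sumblocks /partial_ip [LHS]big_mkcond /=; apply: eq_bigr => i _.
  case: ifP => // iS.
  by rewrite yx submxcolZ /d submxcolB !submxcol_pad iS subrr scaler0 ip0l.
have := hf x y Mx My; rewrite -hpart yx !ipZl -scalemxAr ipZr => hle.
have gn : g != 0 by rewrite gt_eqF.
set q := ip d (H *m d) in hle *.
have e1 : f y - f x - partial_ip S f x y <= 2^-1 * (g * (g * q)) by lra.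
have g2 : 0 <= 2 / g ^+ 2 by rewrite divr_ge0 // exprn_ge0 // ltW.
apply: le_trans (ler_wpM2l g2 e1) _.
have -> : 2 / g ^+ 2 * (2^-1 * (g * (g * q))) = q by field.
have hp := quad_par H (padS S s) (padS S x).
have h0 := hpsd (padS S s + padS S x).
have hs := @quad_pad S s Ms'.
have hx := @quad_pad S x (fun i _ => Mx i).
rewrite /q /d; lra.
Qed.
End Sup.

Theorem theorem3 (R : realType) (n : nat) (ms : 'I_n -> nat)
  (Ms : forall i : 'I_n, set 'cV[R]_(ms i))
  (f : 'cV[R]_(\sum_(i < n) ms i) -> R)
  (H : 'M[R]_(\sum_(i < n) ms i)) :
  (forall i, Ms i !=set0) ->
  (forall i, compact (Ms i)) ->
  (forall i, convex_set (Ms i)) ->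
  (forall x, differentiable f x) ->
  (forall v : 'cV[R]_(\sum_(i < n) ms i), 0 <= ip v (H *m v)) ->
  (forall x y, prodset Ms x -> prodset Ms y ->
     f y <= f x + ip (y - x) (grad f x) + 2^-1 * ip (y - x) (H *m (y - x))) ->
  forall tau : nat, (1 <= tau <= n)%N ->
  (exp_set_curv Ms f tau <=
    (4 * (tau%:R * Bavg Ms H + tau%:R * (tau%:R - 1) * muavg Ms H))%:E)%E.
Proof.
move=> hne hc hconv hdiff hpsd hf tau htau.
have hle S := @set_curv_le R n ms Ms H hc f hconv hpsd hf S.
rewrite /exp_set_curv.
set C := 'C(n, tau).
rewrite (@le_trans _ _ (((C%:R)^-1)%:E * \sum_(S : {set 'I_n} | #|S| == tau) (4 * @KS R n ms Ms H S)%:E)%E) //.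
  apply: lee_wpmul2l; first by rewrite lee_fin invr_ge0.
  by apply: lee_sum => S _; exact: hle.
rewrite sumEFin -EFinM lee_fin le_eqVlt; apply/orP; left; apply/eqP.
have n0 : (0 < n)%N by case/andP: htau => h1 h2; apply: leq_trans h2.
have C0 : (C%:R : R) != 0 by rewrite pnatr_eq0 -lt0n bin_gt0; case/andP: htau.
have hc1 i : (#|[set S : {set 'I_n} | (#|S| == tau) && (i \in S)]%SET|%:R : R)
    = C%:R * (tau%:R * n%:R^-1).
  have e := c1_nat i htau.
  apply: (@mulfI _ (n%:R)); first by rewrite pnatr_eq0 -lt0n.
  rewrite -natrM e natrM; field; by rewrite pnatr_eq0 -lt0n.
have hc2 i j : j != i -> (#|[set S : {set 'I_n} | (#|S| == tau) && (i \in S) && (j \in S)]%SET|%:R : R)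
    = C%:R * (tau%:R * (tau%:R - 1) * (n%:R * (n%:R - 1))^-1).
  move=> ji; have e := c2_nat ji htau.
  have n2 : (1 < n)%N.
    have h : nat_of_ord j <> nat_of_ord i by move=> h; rewrite (val_inj h) eqxx in ji.
    have := ltn_ord i; have := ltn_ord j; clear e; lia.
  have t1 : (1 <= tau)%N by case/andP: htau.
  have nn : (n%:R * (n%:R - 1) : R) != 0.
    by rewrite mulf_eq0 negb_or pnatr_eq0 -lt0n n0 /= subr_eq0 pnatr_eq1 neq_ltn n2 orbT.
  apply: (mulfI nn).
  rewrite -[in RHS](natrB _ t1) -(natrB _ (ltnW n2)) -!natrM e !natrM !natrB //.
  have hh : forall a b c : R, a != 0 -> a * (b * (c / a)) = b * c.
    by move=> a b c a0; field.
  by rewrite hh // mulrC.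
rewrite -mulr_sumr /KS.
under eq_bigr do rewrite big_split /=.
rewrite big_split /= (exch1 (fun S : {set _} => #|S| == tau)) (exch2 (fun S : {set _} => #|S| == tau)) /=.
under eq_bigr do rewrite hc1.
under [X in _ + X]eq_bigr => i _ do under eq_bigr => j ji do rewrite hc2 //.
rewrite -mulr_suml.
under [X in _ + X]eq_bigr do rewrite -mulr_suml.
rewrite -mulr_suml /Bavg /muavg.
have hh : forall p q x y : R, (C%:R)^-1 * (4 * (x * (C%:R * p) + y * (C%:R * q))) = 4 * (p * x + q * y).
  by move=> p q x y; field.
rewrite (hh (tau%:R / n%:R) (tau%:R * (tau%:R - 1) / (n%:R * (n%:R - 1)))).
by rewrite -!mulrA.
Qed.
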